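(* Let $G$ be a finite undirected weighted graph on $V=\{1,\dots,n\}$ with symmetric nonnegative weights $w(ij)=w(ji)\ge0$, degrees $d_i=\sum_j w(ij)$, $\mathrm{vol}(V)=\sum_i d_i>0$, and positive vertex measure $\mu_1,\dots,\mu_n>0$. For $x\in\mathbb R^n$ put $$\langle x,\mathcal M(x)\rangle_\mu=\frac12\sum_{i,j=1}^n\Big(\frac{d_id_j}{\mathrm{vol}(V)}-w(ij)\Big)|x_i-x_j|,$$ and for $x\neq0$ let $r^*_{\mathcal M}(x)=\langle x,\mathcal M(x)\rangle_\mu/\|x\|_\infty$, and $\lambda_1(r^*_{\mathcal M})=\max_{x\ne0}r^*_{\mathcal M}(x)$. Then for every $A\subseteq V$, $r^*_{\mathcal M}(\mathbb 1_A-\mathbb 1_{\overline A})=q(A)\,\mu(V)$, and $$q(G)=\max_{A\subseteq V}q(A)=\lambda_1(r^*_{\mathcal M})/\mu(V).$$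
   Context: $\|x\|_\infty=\max_i|x_i|$; $\mathbb 1_A$ is the indicator vector of $A$, $\overline A=V\setminus A$, $\mu(A)=\sum_{i\in A}\mu_i$, $\mathrm{vol}(A)=\sum_{i\in A}d_i$. Modularity: $Q(A)=\sum_{i,j\in A}w(ij)-\mathrm{vol}(A)^2/\mathrm{vol}(V)$, and $q(A)=\frac{2}{\mu(V)}Q(A)$. The quantity $\langle x,\mathcal M(x)\rangle_\mu$ is the paper's notation for the pairing with the nonlinear modularity operator; here it is simply defined by the displayed formula. *)

(* Defs.v *)
From HB Require Import structures.
From mathcomp Require Import all_boot all_order all_algebra.
Set Implicit Arguments. Unset Strict Implicit. Unset Printing Implicit Defensive.
Import Order.TTheory GRing.Theory Num.Theory.
Local Open Scope ring_scope.

Section Modularity.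
Variables (R : realFieldType) (n : nat).
Variables (w : 'I_n -> 'I_n -> R) (mu : 'I_n -> R).

Definition deg (i : 'I_n) : R := \sum_j w i j.
Definition vol (A : {set 'I_n}) : R := \sum_(i in A) deg i.
Definition volV : R := \sum_i deg i.
Definition meas (A : {set 'I_n}) : R := \sum_(i in A) mu i.
Definition muV : R := \sum_i mu i.

Definition Qmod (A : {set 'I_n}) : R :=
  \sum_(i in A) \sum_(j in A) w i j - vol A ^+ 2 / volV.
Definition qmod (A : {set 'I_n}) : R := 2 / muV * Qmod A.

(* q(G) = max_{A subset V} q(A); the seed 0 is harmless since q(set0) = 0 *)
Definition qgraph : R := \big[Num.max/0]_(A : {set 'I_n}) qmod A.

Definition infnorm (x : 'rV[R]_n) : R := \big[Num.max/0]_i `|x ord0 i|.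

Definition pairM (x : 'rV[R]_n) : R :=
  2^-1 * \sum_i \sum_j (deg i * deg j / volV - w i j) * `|x ord0 i - x ord0 j|.

Definition rstarM (x : 'rV[R]_n) : R := pairM x / infnorm x.

Definition sgnvec (A : {set 'I_n}) : 'rV[R]_n :=
  \row_i (if i \in A then 1 else -1).

Definition is_lambda1 (l : R) : Prop :=
  (exists2 x : 'rV[R]_n, x != 0 & rstarM x = l) /\
  (forall x : 'rV[R]_n, x != 0 -> rstarM x <= l).
End Modularity.

(* Main.v *)
Require Import Defs.
From mathcomp Require Import all_boot all_order all_algebra.
From mathcomp Require Import ring lra.
Set Implicit Arguments. Unset Strict Implicit. Unset Printing Implicit Defensive.
Import Order.TTheory GRing.Theory Num.Theory.
Local Open Scope ring_scope.

Section Helpers.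
Variables (R : realFieldType) (n : nat) (w : 'I_n -> 'I_n -> R).
Hypothesis w_sym : forall i j, w i j = w j i.
Hypothesis vol_pos : 0 < volV w.

Let c i j := deg w i * deg w j / volV w - w i j.

Lemma volV0 : volV w != 0.
Proof. by rewrite gt_eqF. Qed.

Lemma row0 i : \sum_j c i j = 0.
Proof.
rewrite /c sumrB -mulr_suml -mulr_sumr -/(volV w) mulfK ?volV0 //.
by rewrite /deg subrr.
Qed.

Lemma col0 j : \sum_i c i j = 0.
Proof.
rewrite /c sumrB -!mulr_suml -/(volV w) -mulrA mulrC -mulrA mulVf ?volV0 // mulr1.
by rewrite /deg; under eq_bigr do rewrite w_sym; rewrite subrr.
Qed.

Lemma sumSS (S : {set 'I_n}) :
  \sum_i \sum_j c i j * ((i \in S)%:R * (j \in S)%:R) = - Qmod w S.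
Proof.
transitivity (\sum_(i in S) \sum_(j in S) c i j).
  rewrite (bigID (fun i => i \in S)) /= [X in _ + X]big1 ?addr0; last first.
    by move=> i /negbTE ->; apply: big1 => j _; rewrite mul0r mulr0.
  apply: eq_bigr => i Hi; rewrite (bigID (fun j => j \in S)) /=.
  rewrite [X in _ + X]big1 ?addr0; last by move=> j /negbTE ->; rewrite mulr0 mulr0.
  by apply: eq_bigr => j Hj; rewrite Hi Hj mulr1 mulr1.
rewrite /c /Qmod /vol.
under eq_bigr do rewrite sumrB.
rewrite sumrB opprB; congr (_ - _).
rewrite expr2 mulr_suml mulr_suml; apply: eq_bigr => i _.
rewrite mulr_sumr mulr_suml; apply: eq_bigr => j _.
by [].
Qed.

Lemma ind_neq (a b : bool) :
  ((a != b) : nat)%:R = a%:R + b%:R - 2 * (a%:R * b%:R) :> R.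
Proof. by case: a; case: b => /=; rewrite ?mul0r ?mulr0 ?mul1r; ring. Qed.

Lemma sum_ind (S : {set 'I_n}) :
  \sum_i \sum_j c i j * (((i \in S) != (j \in S)) : nat)%:R = 2 * Qmod w S.
Proof.
under eq_bigr do under eq_bigr do rewrite ind_neq mulrBr mulrDr.
under eq_bigr do rewrite sumrB big_split /=.
rewrite sumrB big_split /=.
have -> : \sum_i \sum_j c i j * (i \in S)%:R = 0.
  by rewrite big1 // => i _; rewrite -mulr_suml row0 mul0r.
have -> : \sum_i \sum_j c i j * (j \in S)%:R = 0.
  by rewrite exchange_big big1 // => j _; rewrite -mulr_suml col0 mul0r.
under eq_bigr do under eq_bigr do rewrite mulrCA.
under eq_bigr do rewrite -mulr_sumr.
by rewrite -mulr_sumr sumSS add0r sub0r mulrN opprK.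
Qed.

Lemma pair_decomp (x y : 'rV[R]_n) (d : R) (S : {set 'I_n}) :
  (forall i j, `|x ord0 i - x ord0 j| =
      `|y ord0 i - y ord0 j| + d * (((i \in S) != (j \in S)) : nat)%:R) ->
  pairM w x = pairM w y + d * Qmod w S.
Proof.
move=> H; rewrite /pairM.
under eq_bigr do under eq_bigr do rewrite H mulrDr.
under eq_bigr do rewrite big_split /=.
rewrite big_split /= mulrDr; congr (_ + _).
under eq_bigr do under eq_bigr do rewrite mulrCA.
under eq_bigr do rewrite -mulr_sumr.
rewrite -mulr_sumr.
have := sum_ind S; rewrite /c => ->.
by rewrite mulrCA mulKf // pnatr_eq0.
Qed.

End Helpers.
Section Bound.
Variables (R : realFieldType) (n : nat) (w : 'I_n -> 'I_n -> R).
Hypothesis w_sym : forall i j, w i j = w j i.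
Hypothesis vol_pos : 0 < volV w.
Variable K : R.
Hypothesis HK : forall S, Qmod w S <= K.
Hypothesis K0 : 0 <= K.

Lemma pair_const (x : 'rV[R]_n) a : (forall i, x ord0 i = a) -> pairM w x = 0.
Proof.
move=> H; rewrite /pairM big1 ?mulr0 // => i _; rewrite big1 // => j _.
by rewrite !H subrr normr0 mulr0.
Qed.

Lemma pair_bound k : forall (x : 'rV[R]_n) (a b : R),
  leq #|[set i | a < x ord0 i]| k -> a <= b ->
  (forall i, a <= x ord0 i <= b) -> pairM w x <= (b - a) * K.
Proof.
have Hemp : forall (x : 'rV[R]_n) (a b : R), a <= b -> (forall i, a <= x ord0 i <= b) ->
    [set i | a < x ord0 i] = set0 -> pairM w x <= (b - a) * K.
  move=> x a b Hab Hx E; rewrite (@pair_const x a); first by rewrite mulr_ge0 // subr_ge0.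
  move=> i; have := Hx i; case/andP => Hai _; apply/eqP; rewrite eq_le Hai andbT.
  rewrite leNgt; apply/negP => Hlt; have : i \in [set i | a < x ord0 i] by rewrite inE.
  by rewrite E inE.
elim: k => [|k IH] x a b Hc Hab Hx.
  by apply: Hemp => //; apply/eqP; rewrite -cards_eq0 -leqn0.
case: (eqVneq [set i | a < x ord0 i] set0) => [E|/set0Pn [i0]]; first exact: Hemp.
rewrite inE => Hi0.
pose j0 := Order.arg_min i0 (fun j => a < x ord0 j) (fun j => x ord0 j).
have [Pj0 Hmin] : a < x ord0 j0 /\ forall j, a < x ord0 j -> x ord0 j0 <= x ord0 j.
  by rewrite /j0; case: arg_minP => // j Pj Hj; split.
set m := x ord0 j0.
pose S := [set i | x ord0 i <= a].
pose y : 'rV[R]_n := \row_i (if x ord0 i <= a then m else x ord0 i).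
have Hy i : y ord0 i = if x ord0 i <= a then m else x ord0 i by rewrite mxE.
have Hmb : m <= b by case/andP: (Hx j0).
have Hdec : pairM w x = pairM w y + (m - a) * Qmod w S.
  apply: pair_decomp => // i j; rewrite !Hy !inE.
  have := Hx i; have := Hx j; case/andP => Haj _; case/andP => Hai _.
  case: (leP (x ord0 i) a) => Hi; case: (leP (x ord0 j) a) => Hj /=.
  - have -> : x ord0 i = a by apply/eqP; rewrite eq_le Hi Hai.
    have -> : x ord0 j = a by apply/eqP; rewrite eq_le Hj Haj.
    by rewrite !subrr normr0 mulr0 addr0.
  - have -> : x ord0 i = a by apply/eqP; rewrite eq_le Hi Hai.
    have := Hmin _ Hj => Hmj.
    by rewrite !ler0_norm ?subr_le0 ?mulr1 //; try lra; exact: ltW.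
  - have -> : x ord0 j = a by apply/eqP; rewrite eq_le Hj Haj.
    have := Hmin _ Hi => Hmi.
    by rewrite !ger0_norm ?subr_ge0 ?mulr1 //; try lra; exact: ltW.
  - by rewrite mulr0 addr0.
have Hyb : forall i, m <= y ord0 i <= b.
  move=> i; rewrite Hy; case: (leP (x ord0 i) a) => Hi; first by rewrite lexx Hmb.
  by rewrite Hmin //; case/andP: (Hx i).
have Hc' : leq #|[set i | m < y ord0 i]| k.
  have Hsub : [set i | m < y ord0 i] \subset [set i | a < x ord0 i] :\ j0.
    apply/subsetP => i; rewrite !inE Hy; case: (leP (x ord0 i) a) => Hi; first by rewrite ltxx.
    by move=> Hmi; rewrite andbT; apply/eqP => Eij; rewrite Eij ltxx in Hmi.
  have H1 := subset_leq_card Hsub.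
  move: Hc; rewrite (cardsD1 j0) inE Pj0 add1n ltnS => Hc.
  exact: leq_trans H1 Hc.
rewrite Hdec.
have := IH y m b Hc' Hmb Hyb => H1.
have H2 : (m - a) * Qmod w S <= (m - a) * K.
  by apply: ler_wpM2l => //; rewrite subr_ge0 ltW.
have -> : (b - a) * K = (b - m) * K + (m - a) * K by ring.
exact: lerD.
Qed.

End Bound.

Unset Implicit Arguments.
Set Strict Implicit.

Theorem theorem3p7 (R : realFieldType) (n : nat)
  (w : 'I_n -> 'I_n -> R) (mu : 'I_n -> R)
  (w_sym : forall i j, w i j = w j i)
  (w_ge0 : forall i j, 0 <= w i j)
  (vol_pos : 0 < volV w)
  (mu_pos : forall i, 0 < mu i) :
  (forall A : {set 'I_n}, rstarM w (sgnvec R A) = qmod w mu A * muV mu) /\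
  (exists l : R, is_lambda1 w l /\ qgraph w mu = l / muV mu).
Proof.
have n0 : (0 < n)%N.
  case: (posnP n) => // n0; move: vol_pos; rewrite /volV big1 ?ltxx // => i.
  by have := ltn_ord i; rewrite {2}n0.
pose i1 : 'I_n := Ordinal n0.
have muV_pos : 0 < muV mu.
  rewrite /muV (bigD1 i1) //=; apply: ltr_wpDr; last exact: mu_pos.
  by apply: sumr_ge0 => i _; apply: ltW.
have muV0 : muV mu != 0 by rewrite gt_eqF.
have le_inf : forall (x : 'rV[R]_n) i, `|x ord0 i| <= infnorm x.
  by move=> x i; rewrite /infnorm (bigD1 i) //= le_max lexx.
have inf_ge0 : forall (x : 'rV[R]_n), 0 <= infnorm x.
  move=> x; rewrite /infnorm; apply: (big_ind (fun v => 0 <= v)) => //.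
  by move=> u v hu hv; rewrite le_max hu.
have pairS : forall A : {set 'I_n}, pairM w (sgnvec R A) = 2 * Qmod w A.
  move=> A; rewrite (@pair_decomp R n w w_sym vol_pos _ 0 2 A).
    by rewrite (@pair_const R n w _ 0) ?add0r // => i; rewrite mxE.
  move=> i j; rewrite !mxE subrr normr0 add0r.
  case: (i \in A); case: (j \in A) => /=; rewrite ?subrr ?normr0 ?mulr0 ?mulr1 //.
    by rewrite (_ : (1:R) - -1 = 2%:R) ?normr_nat //; ring.
  by rewrite (_ : (-1:R) - 1 = - 2%:R) ?normrN ?normr_nat //; ring.
have infS : forall A : {set 'I_n}, infnorm (sgnvec R A) = 1.
  move=> A; apply/eqP; rewrite eq_le; apply/andP; split.
    rewrite /infnorm; apply: (big_ind (fun v => v <= 1)) => //.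
      by move=> u v hu hv; rewrite ge_max hu.
    by move=> i _; rewrite mxE; case: (i \in A); rewrite ?normrN normr1.
  by have := le_inf (sgnvec R A) i1; rewrite mxE; case: (i1 \in A); rewrite ?normrN normr1.
have part1 : forall A, rstarM w (sgnvec R A) = qmod w mu A * muV mu.
  move=> A; rewrite /rstarM pairS infS divr1 /qmod mulrAC divfK //.
split; first exact: part1.
have q0 : qmod w mu set0 = 0.
  by rewrite /qmod /Qmod /vol !big_set0 expr2 !mul0r subrr mulr0.
have le_qg : forall A, qmod w mu A <= qgraph w mu.
  by move=> A; rewrite /qgraph (bigD1 A) //= le_max lexx.
have qg_ge0 : 0 <= qgraph w mu by rewrite -q0 le_qg.
have [A0 HA0] : exists A, qgraph w mu = qmod w mu A.
  rewrite /qgraph; apply: (big_ind (fun v => exists A, v = qmod w mu A)).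
  - by exists set0.
  - move=> u v [A ->] [B ->]; case: (leP (qmod w mu A) (qmod w mu B)) => h.
      by exists B.
    by exists A.
  by move=> A _; exists A.
exists (qgraph w mu * muV mu); split; last by rewrite mulfK.
split.
  exists (sgnvec R A0); last by rewrite part1 HA0.
  apply/eqP => /rowP /(_ i1); rewrite !mxE; case: (i1 \in A0) => /eqP.
    by rewrite oner_eq0.
  by rewrite oppr_eq0 oner_eq0.
move=> x xn0.
have [i Hi] : exists i, x ord0 i != 0.
  case: (pickP (fun i => x ord0 i != 0)) => [i Hi|H]; first by exists i.
  have x0 : x = 0 by apply/rowP => j; rewrite mxE; apply/eqP; apply/negbFE; exact: (H j).
  by rewrite x0 eqxx in xn0.
have t_pos : 0 < infnorm x.
  by apply: lt_le_trans (le_inf x i); rewrite normr_gt0.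
pose K := qgraph w mu * (muV mu / 2).
have HK : forall S, Qmod w S <= K.
  move=> S; have -> : Qmod w S = qmod w mu S * (muV mu / 2).
    by rewrite /qmod; field; rewrite muV0.
  by rewrite ler_pM2r ?le_qg // divr_gt0.
have K0 : 0 <= K by rewrite mulr_ge0 // divr_ge0 // ltW.
have := @pair_bound R n w w_sym vol_pos K HK K0 _ x (- infnorm x) (infnorm x) (leqnn _).
move=> /(_ _ _) H; rewrite /rstarM ler_pdivrMr //.
have -> : qgraph w mu * muV mu * infnorm x = (infnorm x - - infnorm x) * K.
  by rewrite /K; field.
apply: H.
  by have := inf_ge0 x; lra.
by move=> j; rewrite -ler_norml.
Qed.
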